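(* In the standing setting, for all $t\in\{1,\dots,\overline R\}$, $k\in\{0,\dots,m\}$ and $\delta\in\{0,\dots,N\}$, $$\varphi^v(t,k,\delta)\le v\big(\sigma^v(t-1)\wedge k\big)-\big(\sigma^v(t-1)\wedge k\big)\,p_{t-1}.$$
   Context: Standing setting. Integers $n\ge2$, $m\ge1$; $N:=(n-1)m$. Reals $p_{\mathrm{init}}\ge0$, $\Delta P>0$; the price at round $t\ge0$ is $p_t:=p_{\mathrm{init}}+t\Delta P$. The player's valuation $v:\{0,\dots,m\}\to[0,\infty)$ satisfies $v(0)=0$ and is non-decreasing and concave. $\overline R:=\lceil (v(1)-p_{\mathrm{init}})/\Delta P\rceil$, assumed $\ge1$. For $t\ge0$, $\sigma^v(t):=\min\operatorname{argmax}_{0\le u\le m}(v(u)-up_t)$. The opponent is given by random variables $Z_1\ge Z_2\ge\dots\ge Z_N\ge0$ (a.s.) on a probability space $(\Omega,\mathcal F,\mathbb P)$; its demand at price $p$ is $\delta(p):=\sum_{j=1}^N\mathbf 1\{Z_j>p\}$. For $t\ge1$ fix transition kernels $K_t(\delta'\mid\delta)$ ($\delta,\delta'\in\{0,\dots,N\}$), each $K_t(\cdot\mid\delta)$ a probability on $\{0,\dots,\delta\}$, with $K_t(\delta'\mid\delta)=\mathbb P(\delta(p_t)=\delta'\mid\delta(p_{t-1})=\delta)$ whenever $\mathbb P(\delta(p_{t-1})=\delta)>0$. Value function: for $t\in\{1,\dots,\overline R\}$, $k\in\{0,\dots,m\}$, $\delta\in\{0,\dots,N\}$: $\varphi^v(t,k,\delta):=v(k)-kp_{t-1}$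 if $k+\delta\le m$; $:=\max_{0\le u\le k}\sum_{\delta'=0}^N K_t(\delta'\mid\delta)\varphi^v(t+1,u,\delta')$ if $k+\delta>m$ and $t<\overline R$; $:=0$ if $k+\delta>m$ and $t=\overline R$. $a\wedge b:=\min(a,b)$. *)

(* Defs.v *)
From HB Require Import structures.
From mathcomp Require Import all_boot all_order all_algebra.
From mathcomp Require Import all_classical all_reals all_analysis.
Set Implicit Arguments. Unset Strict Implicit. Unset Printing Implicit Defensive.
Import Order.TTheory GRing.Theory Num.Theory.
Local Open Scope ring_scope.

Section Defs.
Variable R : realType.

Definition price (pinit dP : R) (t : nat) : R := pinit + t%:R * dP.

Definition valuation_ok (m : nat) (v : nat -> R) : Prop :=
  [/\ v 0%N = 0,
      (forall u, (u <= m)%N -> 0 <= v u),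
      (forall u, (u < m)%N -> v u <= v u.+1) &
      (forall u, (0 < u < m)%N -> v u.+1 - v u <= v u - v u.-1)].

Definition Rbar (pinit dP : R) (v : nat -> R) : nat :=
  `|Num.ceil ((v 1%N - pinit) / dP)|%N.

Definition sigma (m : nat) (pinit dP : R) (v : nat -> R) (t : nat) : nat :=
  let g := fun u : nat => v u - u%:R * price pinit dP t in
  find (fun u => [forall w : 'I_m.+1, g w <= g u]) (iota 0 m.+1).

(* value function, by recursion on the fuel s = Rbar - t.
   K t d d' = K_t(d' | d). *)
Fixpoint phi_aux (m N : nat) (pinit dP : R) (v : nat -> R)
    (K : nat -> nat -> nat -> R) (s t k d : nat) : R :=
  if (k + d <= m)%N then v k - k%:R * price pinit dP t.-1
  else match s with
       | 0%N => 0
       | s'.+1 =>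
         let F := fun u : nat =>
           \sum_(d' < N.+1) K t d d' * phi_aux m N pinit dP v K s' t.+1 u d' in
         \big[Num.max/F 0%N]_(u < k.+1) F u
       end.

Definition phi (m N : nat) (pinit dP : R) (v : nat -> R)
    (K : nat -> nat -> nat -> R) (t k d : nat) : R :=
  phi_aux m N pinit dP v K (Rbar pinit dP v - t) t k d.

Definition demand {T : Type} (N : nat) (Z : nat -> T -> R) (p : R) (x : T) : nat :=
  (\sum_(1 <= j < N.+1) nat_of_bool (p < Z j x)%R)%N.

End Defs.

(* Main.v *)
Require Import Defs.
From HB Require Import structures.
From mathcomp Require Import all_boot all_order all_algebra.
From mathcomp Require Import all_classical all_reals all_analysis.
Import Order.TTheory GRing.Theory Num.Theory.
Local Open Scope ring_scope.
From mathcomp Require Import zify ring lra.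

Section H.
Variable R : realType.
Variables (m : nat) (v : nat -> R) (pinit dP : R).
Hypothesis hv : valuation_ok m v.

Lemma concave_v j u : (j <= u)%N -> (u < m)%N -> v u.+1 - v u <= v j.+1 - v j.
Proof.
case: hv => _ _ _ hc.
elim: u => [|u IH] hju hum.
  by have -> : j = 0%N by lia.
rewrite leq_eqVlt in hju; case/orP: hju => [/eqP->//|hju].
apply: le_trans (hc u.+1 _) (IH _ _); lia.
Qed.

Lemma g_dec (p : R) j i : (j < i)%N -> (i <= m)%N -> v j.+1 - v j < p ->
  v i - i%:R * p < v j - j%:R * p.
Proof.
move=> hji him hd; elim: i hji him => [|i IH] //= hji him.
have hd' : v i.+1 - v i <= v j.+1 - v j by apply: concave_v; lia.
rewrite -addn1 natrD mulrDl mul1r.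
rewrite leq_eqVlt in hji; case/orP: hji => [/eqP [<-]|hji].
  rewrite addn1; lra.
have := IH hji (ltnW him); rewrite addn1; lra.
Qed.

Lemma argmax_ex (p : R) : exists2 u, (u <= m)%N &
  forall w, (w <= m)%N -> v w - w%:R * p <= v u - u%:R * p.
Proof.
suff H : forall m', (m' <= m)%N -> exists2 u, (u <= m')%N &
  forall w, (w <= m')%N -> v w - w%:R * p <= v u - u%:R * p.
  exact: H.
elim=> [|m' IH] hm.
  by exists 0%N => // w; rewrite leqn0 => /eqP->.
have [u hu H] := IH (ltnW hm).
case: (lerP (v m'.+1 - m'.+1%:R * p) (v u - u%:R * p)) => h.
  exists u; first lia.
  move=> w; rewrite leq_eqVlt; case/orP=> [/eqP->//|hw]; exact: H.
exists m'.+1 => // w; rewrite leq_eqVlt; case/orP=> [/eqP->//|hw].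
apply: le_trans (H w hw) _; exact: ltW.
Qed.

Lemma sigma_spec t : let s := sigma m pinit dP v t in
  let g u := v u - u%:R * price pinit dP t in
  [/\ (s <= m)%N, (forall w, (w <= m)%N -> g w <= g s) &
      (forall i j, (i <= j)%N -> (j <= s)%N -> g i <= g j)].
Proof.
move=> s g.
have hhas : has (fun u => [forall w : 'I_m.+1, g w <= g u]) (iota 0 m.+1).
  have [u hu H] := argmax_ex (price pinit dP t).
  apply/hasP; exists u; first by rewrite mem_iota; lia.
  apply/forallP => w; apply: H; have := ltn_ord w; lia.
have hs : (s < m.+1)%N.
  by have := hhas; rewrite has_find size_iota.
have hmax : forall w, (w <= m)%N -> g w <= g s.
  have := nth_find 0%N hhas.
  rewrite -/(sigma m pinit dP v t) -/s nth_iota // add0n => /forallP H w hw.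
  exact: (H (Ordinal (hw : (w < m.+1)%N))).
split=> //.
move=> i j hij hjs.
elim: j hij hjs => [|j IH] hij hjs.
  by have -> : i = 0%N by lia.
rewrite leq_eqVlt in hij; case/orP: hij => [/eqP->//|hij].
apply: le_trans (IH _ _) _; [lia|lia|].
rewrite /g; case: (lerP (price pinit dP t) (v j.+1 - v j)) => hd.
  rewrite -addn1 natrD mulrDl mul1r addn1; lra.
have := @g_dec _ j s _ _ hd.
have := hmax j _; rewrite /g => H1 H2.
have : v s - s%:R * price pinit dP t < v j - j%:R * price pinit dP t by apply: H2; lia.
have := H1 ltac:(lia); lra.
Qed.
End H.

Section M.
Variable R : realType.
Variables (m N : nat) (v : nat -> R) (pinit dP : R) (K : nat -> nat -> nat -> R).
Hypothesis hv : valuation_ok m v.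
Hypothesis hdP : 0 < dP.
Hypothesis K0 : forall t d d', (1 <= t)%N -> (d <= N)%N -> 0 <= K t d d'.
Hypothesis Kz : forall t d d', (1 <= t)%N -> (d <= N)%N -> (d < d')%N -> K t d d' = 0.
Hypothesis K1 : forall t d, (1 <= t)%N -> (d <= N)%N -> \sum_(d' < d.+1) K t d d' = 1.

Let B t k := v (minn (sigma m pinit dP v t.-1) k)
      - (minn (sigma m pinit dP v t.-1) k)%:R * price pinit dP t.-1.

Lemma Bbase t k : (k <= m)%N -> v k - k%:R * price pinit dP t.-1 <= B t k.
Proof.
move=> hk; have [hs hmax _] := @sigma_spec _ m v pinit dP hv t.-1.
rewrite /B; case: (leqP (sigma m pinit dP v t.-1) k) => h.
  exact: hmax.
by [].
Qed.

Lemma Bpos t k : 0 <= B t k.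
Proof.
have [hs _ hmono] := @sigma_spec _ m v pinit dP hv t.-1.
rewrite /B; apply: le_trans (hmono 0%N _ _ _); last by rewrite geq_minl.
  by case: hv => -> _ _ _; rewrite mul0r subr0.
by [].
Qed.

Lemma Bstep t u k : (1 <= t)%N -> (u <= k)%N -> (k <= m)%N -> B t.+1 u <= B t k.
Proof.
move=> ht huk hk.
have [hs' hmax' hmono'] := @sigma_spec _ m v pinit dP hv t.-1.
rewrite /B /=.
set j := minn (sigma m pinit dP v t) u.
have hju : (j <= u)%N by rewrite geq_minr.
clearbody j.
have hpr : price pinit dP t.-1 <= price pinit dP t.
  rewrite /price lerD2l; apply: ler_wpM2r; [exact: ltW|]; rewrite ler_nat; lia.
apply: (@le_trans _ _ (v j - j%:R * price pinit dP t.-1)).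
  rewrite lerD2l lerN2; apply: ler_wpM2l => //.
case: (leqP j (sigma m pinit dP v t.-1)) => h.
  apply: hmono'; [lia | exact: geq_minl].
rewrite (minn_idPl (_ : sigma m pinit dP v t.-1 <= k)%N); last lia.
apply: hmax'; lia.
Qed.

Lemma phi_bound s : forall t k d, (1 <= t)%N -> (k <= m)%N -> (d <= N)%N ->
  phi_aux m N pinit dP v K s t k d <= B t k.
Proof.
elim: s => [|s IH] t k d ht hk hd /=.
  case: ifP => _; [exact: Bbase | exact: Bpos].
case: ifP => _; first exact: Bbase.
have hF : forall u, (u <= k)%N ->
  \sum_(d' < N.+1) K t d d' * phi_aux m N pinit dP v K s t.+1 u d' <= B t k.
  move=> u hu; apply: le_trans (@Bstep t u k ht hu hk).
  apply: (@le_trans _ _ (\sum_(d' < N.+1) K t d d' * B t.+1 u)).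
    apply: ler_sum => i _; apply: ler_wpM2l; first exact: K0.
    apply: IH => //; [lia | have := ltn_ord i; lia].
  rewrite -mulr_suml.
  suff -> : \sum_(d' < N.+1) K t d d' = 1 by rewrite mul1r.
  rewrite -(@K1 t d ht hd) [RHS](big_ord_widen N.+1 (fun d' => K t d d')); last lia.
  rewrite [RHS]big_mkcond; apply: eq_bigr => i _.
  case: ifP => // /negbT; rewrite -leqNgt => h; rewrite Kz //; lia.
apply: (big_ind (fun x => x <= B t k)).
- exact: hF.
- by move=> x y hx hy; rewrite ge_max hx hy.
move=> u _; apply: hF; have := ltn_ord u; lia.
Qed.
End M.
Local Open Scope classical_set_scope.

Theorem mainTheorem9 (R : realType) (n m N : nat) (pinit dP : R)
  (v : nat -> R)
  (d0 : measure_display) (T : measurableType d0) (P : probability T R)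
  (Z : nat -> T -> R) (K : nat -> nat -> nat -> R) :
  (2 <= n)%N -> (1 <= m)%N -> N = ((n - 1) * m)%N ->
  0 <= pinit -> 0 < dP ->
  valuation_ok m v ->
  (1 <= Num.ceil ((v 1%N - pinit) / dP))%R ->
  (* opponent: random variables Z_1 >= ... >= Z_N >= 0 a.s. *)
  (forall j, (1 <= j <= N)%N -> measurable_fun setT (Z j)) ->
  {ae P, forall x, (forall j, (1 <= j < N)%N -> Z j.+1 x <= Z j x) /\ 0 <= Z N x} ->
  (* each K_t(. | d) is a probability on {0,..,d} *)
  (forall t d d', (1 <= t)%N -> (d <= N)%N -> 0 <= K t d d') ->
  (forall t d d', (1 <= t)%N -> (d <= N)%N -> (d < d')%N -> K t d d' = 0) ->
  (forall t d, (1 <= t)%N -> (d <= N)%N -> \sum_(d' < d.+1) K t d d' = 1) ->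
  (* consistency with the opponent's demand process *)
  (forall t d d', (1 <= t)%N -> (d <= N)%N -> (d' <= N)%N ->
     let A := [set x | demand N Z (price pinit dP t.-1) x = d] in
     let B := [set x | demand N Z (price pinit dP t) x = d'] in
     (0 < P A)%E ->
     K t d d' = fine (P (B `&` A)) / fine (P A)) ->
  forall t k d, (1 <= t <= Rbar pinit dP v)%N -> (k <= m)%N -> (d <= N)%N ->
    phi m N pinit dP v K t k d <=
      v (minn (sigma m pinit dP v t.-1) k)
      - (minn (sigma m pinit dP v t.-1) k)%:R * price pinit dP t.-1.
Proof.
move=> _ _ _ _ hdP hv _ _ _ K0 Kz K1 _ t k d /andP[ht _] hk hd.
exact: (@phi_bound R m N v pinit dP K hv hdP K0 Kz K1).
Qed.
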